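(* Suppose the following two conditions hold: (i) $\mathrm{rank}(A_{\mathrm{eq}}) = \mathrm{rank}([A_{\mathrm{eq}} \; b_{\mathrm{eq}}])$, and (ii) $n_u n_L \geq \mathrm{rank}(A_{\mathrm{eq}})$, where $A_{\mathrm{eq}}$ is the block-diagonal matrix with $n_u$ diagonal blocks each equal to $W_{\Gamma_{\mathrm{eq}},L}^T$, and $b_{\mathrm{eq}} = [-(K_{\mathrm{lqr}}^{(1)})^T; \dots; -(K_{\mathrm{lqr}}^{(n_u)})^T]$ stacks the negated transposed rows of $K_{\mathrm{lqr}}$. Then the solution $(\hat{W}_{L+1}^*, \hat{b}_{L+1}^* )$ of the convex optimization problem $$\min_{\hat{W}_{L+1},\hat{b}_{L+1}} \sum_{i,j=1}^{n_u,n_L} (\hat{W}_{L+1}^{(i,j)} - W_{L+1}^{(i,j)})^2 + \sum_{i=1}^{n_u} (\hat{b}_{L+1}^{(i)} - b_{L+1}^{(i)})^2$$ subject to $\hat{W}_{L+1} W_{\Gamma_{\mathrm{eq}},L} = -K_{\mathrm{lqr}}$ and $\hat{W}_{L+1} b_{\Gamma_{\mathrm{eq}},L} + \hat{b}_{L+1} = 0$, provides a weight and bias for the last layer such that the modified network $\mathcal{N}(x;\theta_{\mathrm{lqr}})$, with $\theta_{l,\mathrm{lqr}} = \theta_l$ for $l \in \{1,\dots,L\}$ and last-layer parameters $\{\hat{W}_{L+1}^*, \hat{b}_{L+1}^*\}$, satisfies $\mathcal{N}(x;\theta_{\mathrm{lqr}}) = -K_{\mathrm{lqr}} x$ for all $x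 \in \mathcal{R}_{\mathrm{eq}}$, while minimizing the change in the parameters of the last layer.
   Context: Consider a linear system $x_{k+1} = A x_k + B u_k$ with $x \in \mathbb{R}^{n_x}$, $u \in \mathbb{R}^{n_u}$, equilibrium $x_{\mathrm{eq}} = 0$, and LQR gain $K_{\mathrm{lqr}}$ (optimal unconstrained feedback $u = -K_{\mathrm{lqr}} x$ for cost $\sum x^TQx + u^TRu$). A feed-forward ReLU network controller $\mathcal{N}(x;\theta)$ has $L$ hidden layers, with $n_L$ neurons in the last hidden layer, parameters $\theta_l = \{W_l, b_l\}$, layers $f_l(\xi) = W_l \xi + b_l$, ReLU activations $\max(0,\cdot)$, and a linear output layer $u = W_{L+1}\xi_L + b_{L+1}$. An activation pattern assigns to each hidden neuron a binary value (1 if its pre-activation is $\geq 0$, else 0); $\Gamma_{\mathrm{eq}}$ is the activation pattern at $x_{\mathrm{eq}}$, and $\mathcal{R}_{\mathrm{eq}}$ is the polytopic region of states sharing this activation pattern. On $\mathcal{R}_{\mathrm{eq}}$ the output of the last hidden layer is the affine function $W_{\Gamma_{\mathrm{eq}},L} x + b_{\Gamma_{\mathrm{eq}},L}$ (obtained by composing the hidden layers with the fixed activation pattern), so the network equals $W_{L+1}(W_{\Gamma_{\mathrm{eq}},L}x + b_{\Gamma_{\mathrm{eq}},L}) + b_{L+1}$ there. The regions depend only on the hidden layers, so changing the output layer does not change $\mathcal{R}_{\mathrm{eq}}$. Conditions (i)-(ii) are the solvability conditions of the linear system $A_{\mathrm{eq}} w = b_{\mathrm{eq}}$, with $w$ the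 stacked rows of $\hat{W}_{L+1}$, equivalent to $\hat{W}_{L+1} W_{\Gamma_{\mathrm{eq}},L} = -K_{\mathrm{lqr}}$. *)

(* Defs.v *)
From HB Require Import structures.
From mathcomp Require Import all_boot all_order all_algebra.
Set Implicit Arguments. Unset Strict Implicit. Unset Printing Implicit Defensive.
Import Order.TTheory GRing.Theory Num.Theory.
Local Open Scope ring_scope.

(* Layer widths are n 0
   (= n_x, the state dimension), n 1, ..., n L (= n_L).  Hidden layer k+1
   has weights W k : 'M_(n k.+1, n k) and biases b k : 'cV_(n k.+1). *)

Definition relu_mx (R : realFieldType) m p (A : 'M[R]_(m, p)) : 'M[R]_(m, p) :=
  map_mx (fun a => Num.max a 0) A.

Fixpoint hidden (R : realFieldType) (n : nat -> nat)
  (W : forall k, 'M[R]_(n k.+1, n k)) (b : forall k, 'cV[R]_(n k.+1))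
  (k : nat) (x : 'cV[R]_(n O)) : 'cV[R]_(n k) :=
  match k as k0 return 'cV[R]_(n k0) with
  | 0 => x
  | k'.+1 => relu_mx (W k' *m hidden W b k' x + b k')
  end.

Definition preact (R : realFieldType) (n : nat -> nat)
  (W : forall k, 'M[R]_(n k.+1, n k)) (b : forall k, 'cV[R]_(n k.+1))
  (k : nat) (x : 'cV[R]_(n O)) : 'cV[R]_(n k.+1) :=
  W k *m hidden W b k x + b k.

Definition act (R : realFieldType) (n : nat -> nat)
  (W : forall k, 'M[R]_(n k.+1, n k)) (b : forall k, 'cV[R]_(n k.+1))
  (k : nat) (x : 'cV[R]_(n O)) (i : 'I_(n k.+1)) : bool :=
  0 <= preact W b k x i ord0.
Arguments act [R n] W b k x i.

(* x belongs to R_eq: same activation pattern as x_eq = 0 on all L hidden layers *)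
Definition in_Req (R : realFieldType) (n : nat -> nat) (L : nat)
  (W : forall k, 'M[R]_(n k.+1, n k)) (b : forall k, 'cV[R]_(n k.+1))
  (x : 'cV[R]_(n O)) : Prop :=
  forall k, (k < L)%N -> forall i : 'I_(n k.+1), act W b k x i = act W b k 0 i.

Definition Dpat (R : realFieldType) (n : nat -> nat)
  (W : forall k, 'M[R]_(n k.+1, n k)) (b : forall k, 'cV[R]_(n k.+1))
  (k : nat) : 'M[R]_(n k.+1) :=
  diag_mx (\row_i (act W b k 0 i)%:R).
Arguments Dpat [R n] W b k.

(* W_{Gamma_eq,k}, b_{Gamma_eq,k}: composition of the first k hidden layers
   with the activation pattern fixed to Gamma_eq *)
Fixpoint WG (R : realFieldType) (n : nat -> nat)
  (W : forall k, 'M[R]_(n k.+1, n k)) (b : forall k, 'cV[R]_(n k.+1))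
  (k : nat) : 'M[R]_(n k, n O) :=
  match k as k0 return 'M[R]_(n k0, n O) with
  | 0 => 1%:M
  | k'.+1 => Dpat W b k' *m (W k' *m WG W b k')
  end.

Fixpoint bG (R : realFieldType) (n : nat -> nat)
  (W : forall k, 'M[R]_(n k.+1, n k)) (b : forall k, 'cV[R]_(n k.+1))
  (k : nat) : 'cV[R]_(n k) :=
  match k as k0 return 'cV[R]_(n k0) with
  | 0 => 0
  | k'.+1 => Dpat W b k' *m (W k' *m bG W b k' + b k')
  end.

Definition network (R : realFieldType) (n : nat -> nat) (L nu : nat)
  (W : forall k, 'M[R]_(n k.+1, n k)) (b : forall k, 'cV[R]_(n k.+1))
  (Wo : 'M[R]_(nu, n L)) (bo : 'cV[R]_nu) (x : 'cV[R]_(n O)) : 'cV[R]_nu :=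
  Wo *m hidden W b L x + bo.

Definition A_eq (R : realFieldType) (n : nat -> nat) (L nu : nat)
  (W : forall k, 'M[R]_(n k.+1, n k)) (b : forall k, 'cV[R]_(n k.+1))
  : 'M[R]_(\sum_(i < nu) n O, \sum_(j < nu) n L) :=
  \mxblock_(i < nu, j < nu)
    (if i == j then (WG W b L)^T else (0 : 'M[R]_(n O, n L))).

Definition b_eq (R : realFieldType) (n : nat -> nat) (nu : nat)
  (K : 'M[R]_(nu, n O)) : 'M[R]_(\sum_(i < nu) n O, 1) :=
  \mxcol_(i < nu) (- (row i K)^T).

Definition cost (R : realFieldType) (nu nL : nat)
  (Wo : 'M[R]_(nu, nL)) (bo : 'cV[R]_nu)
  (What : 'M[R]_(nu, nL)) (bhat : 'cV[R]_nu) : R :=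
  \sum_(i < nu) \sum_(j < nL) (What i j - Wo i j) ^+ 2
  + \sum_(i < nu) (bhat i ord0 - bo i ord0) ^+ 2.

Definition feasible (R : realFieldType) (n : nat -> nat) (L nu : nat)
  (W : forall k, 'M[R]_(n k.+1, n k)) (b : forall k, 'cV[R]_(n k.+1))
  (K : 'M[R]_(nu, n O)) (What : 'M[R]_(nu, n L)) (bhat : 'cV[R]_nu) : Prop :=
  What *m WG W b L = - K /\ What *m bG W b L + bhat = 0.

Definition is_solution (R : realFieldType) (n : nat -> nat) (L nu : nat)
  (W : forall k, 'M[R]_(n k.+1, n k)) (b : forall k, 'cV[R]_(n k.+1))
  (K : 'M[R]_(nu, n O)) (Wo : 'M[R]_(nu, n L)) (bo : 'cV[R]_nu)
  (What : 'M[R]_(nu, n L)) (bhat : 'cV[R]_nu) : Prop :=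
  feasible W b K What bhat /\
  forall W' b', feasible W b K W' b' -> cost Wo bo What bhat <= cost Wo bo W' b'.

(* Main.v *)
Require Import Defs.
From HB Require Import structures.
From mathcomp Require Import all_boot all_order all_algebra.
Import Order.TTheory GRing.Theory Num.Theory.
Local Open Scope ring_scope.

Section Aux.
Variable R : realFieldType.

Lemma tr_sq m p (Y : 'M[R]_(m, p)) :
  \tr (Y *m Y^T) = \sum_i \sum_j Y i j ^+ 2.
Proof.
rewrite /mxtrace; apply: eq_bigr => i _; rewrite !mxE.
by apply: eq_bigr => j _; rewrite !mxE expr2.
Qed.

Lemma tr_sq_ge0 m p (Y : 'M[R]_(m, p)) : 0 <= \tr (Y *m Y^T).
Proof.
by rewrite tr_sq; apply: sumr_ge0 => i _; apply: sumr_ge0 => j _; apply: sqr_ge0.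
Qed.

Lemma tr_sq_eq0 m p (Y : 'M[R]_(m, p)) : \tr (Y *m Y^T) = 0 -> Y = 0.
Proof.
rewrite tr_sq => /eqP; rewrite psumr_eq0; last first.
  by move=> i _; apply: sumr_ge0 => j _; apply: sqr_ge0.
move=> /allP H; apply/matrixP => i j; rewrite mxE.
have /H /= := mem_index_enum i.
rewrite psumr_eq0; last by move=> k _; apply: sqr_ge0.
move=> /allP H2; have /H2 /= := mem_index_enum j.
by rewrite sqrf_eq0 => /eqP.
Qed.

Lemma hidden_Req (n : nat -> nat) (L : nat)
  (W : forall k, 'M[R]_(n k.+1, n k)) (b : forall k, 'cV[R]_(n k.+1))
  (x : 'cV[R]_(n O)) : in_Req L W b x ->
  forall k, (k <= L)%N -> hidden W b k x = WG W b k *m x + bG W b k.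
Proof.
move=> Hx; elim => [|k IH] HkL /=; first by rewrite mul1mx addr0.
have Hact := Hx k HkL.
rewrite IH ?(ltnW HkL) //.
set v := W k *m (WG W b k *m x + bG W b k) + b k.
have -> : Dpat W b k *m (W k *m WG W b k) *m x + Dpat W b k *m (W k *m bG W b k + b k)
   = Dpat W b k *m v.
  by rewrite /v !mulmxDr !mulmxA addrA.
have key : forall y : R, Num.max y 0 = ((0 <= y)%R : bool)%:R * y.
  move=> y; have [H|H] := boolP (0 <= y); first by rewrite max_l // mul1r.
  by rewrite mul0r max_r // ltW // ltNge.
apply/matrixP => i j; rewrite /relu_mx /Dpat mul_diag_mx [LHS]mxE [RHS]mxE key.
rewrite (ord1 j) [in RHS]mxE -Hact /act /preact IH ?(ltnW HkL) //.
Qed.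

Lemma pyth m p (X Y : 'M[R]_(m, p)) : X *m Y^T = 0 ->
  \tr (Y *m Y^T) <= \tr ((X + Y) *m (X + Y)^T).
Proof.
move=> E1.
have E2 : Y *m X^T = 0 by rewrite -[Y]trmxK -trmx_mul E1 trmx0.
rewrite linearD /= !mulmxDl !mulmxDr E1 E2 addr0 add0r mxtraceD lerDr.
exact: tr_sq_ge0.
Qed.

Lemma proj_exists m p q (M : 'M[R]_(p, q)) (D : 'M[R]_(m, q)) (C Z0 : 'M[R]_(m, p)) :
  Z0 *m M = D -> exists P : 'M[R]_(m, p), P *m M = D /\
   forall Z, Z *m M = D -> \tr ((P - C) *m (P - C)^T) <= \tr ((Z - C) *m (Z - C)^T).
Proof.
move=> HZ0.
set B := row_base (kermx M).
have BM : B *m M = 0.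
  by apply/sub_kermxP; rewrite eq_row_base.
set G := B *m B^T.
have Gu : G \in unitmx.
  rewrite -row_free_unit -kermx_eq0; apply/eqP.
  set X := kermx G.
  have XG : X *m G = 0 by rewrite mulmx_ker.
  have XB : X *m B = 0.
    apply: tr_sq_eq0; rewrite trmx_mul mulmxA -(mulmxA X) -/G XG mul0mx.
    by rewrite /mxtrace big1 // => i _; rewrite mxE.
  apply: (row_free_inj (row_base_free (kermx M))); by rewrite XB mul0mx.
set P := Z0 + (C - Z0) *m B^T *m invmx G *m B.
exists P; split.
  by rewrite /P mulmxDl -mulmxA BM mulmx0 addr0.
move=> Z HZ.
have : (Z - Z0 <= B)%MS.
  rewrite eq_row_base; apply/sub_kermxP; by rewrite mulmxBl HZ HZ0 subrr.
case/submxP => U HU.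
set V := U - (C - Z0) *m B^T *m invmx G.
have ZP : Z - P = V *m B.
  rewrite /V mulmxBl -HU /P; by rewrite opprD addrA.
have PC : (P - C) *m B^T = 0.
  have H : (C - Z0) *m B^T *m invmx G *m B *m B^T = (C - Z0) *m B^T.
    by rewrite -mulmxA -/G -mulmxA mulVmx // mulmx1.
  rewrite /P mulmxBl mulmxDl H mulmxBl.
  by apply/eqP; rewrite subr_eq0 addrC subrK.
have -> : Z - C = (Z - P) + (P - C) by rewrite addrA subrK.
rewrite ZP; apply: pyth.
have BP : B *m (P - C)^T = 0.
  by rewrite -[B in B *m _]trmxK -trmx_mul PC trmx0.
by rewrite -mulmxA BP mulmx0.
Qed.
End Aux.
Section S.
Variables (R : realFieldType) (n : nat -> nat) (L nu : nat)
  (W : forall k, 'M[R]_(n k.+1, n k)) (b : forall k, 'cV[R]_(n k.+1)).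

Definition Mc : 'M[R]_(n L + 1, n O + 1) :=
  col_mx (row_mx (WG W b L) (bG W b L)) (row_mx 0 1%:M).

Lemma feas_iff (K : 'M[R]_(nu, n O)) What bhat :
  feasible W b K What bhat <-> row_mx What bhat *m Mc = row_mx (-K) 0.
Proof.
rewrite /Mc mul_row_col !mul_mx_row add_row_mx mulmx0 mulmx1 addr0 /feasible; split.
  by case=> -> ->.
by case/eq_row_mx.
Qed.

Lemma cost_tr (Wo What : 'M[R]_(nu, n L)) (bo bhat : 'cV[R]_nu) :
  cost Wo bo What bhat =
  \tr ((row_mx What bhat - row_mx Wo bo) *m (row_mx What bhat - row_mx Wo bo)^T).
Proof.
rewrite tr_sq /cost -big_split /=; apply: eq_bigr => i _.
rewrite big_split_ord /= big_ord1; congr (_ + _).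
  apply: eq_bigr => j _; rewrite !mxE.
  by rewrite (_ : split (lshift 1 j) = inl j) //; exact: (unsplitK (inl _ j)).
rewrite !mxE.
by rewrite (_ : split (rshift (n L) ord0) = inr ord0) //; exact: (unsplitK (inr _ ord0)).
Qed.

Lemma feas_rank (K : 'M[R]_(nu, n O)) :
  \rank (A_eq L nu W b) = \rank (row_mx (A_eq L nu W b) (b_eq K)) ->
  exists What : 'M[R]_(nu, n L), What *m WG W b L = - K.
Proof.
move=> Hr.
set A := A_eq L nu W b; set bb := b_eq K.
have Hsub : ((bb^T) <= A^T)%MS.
  have S1 : (A^T <= col_mx A^T bb^T)%MS by rewrite -addsmxE addsmxSl.
  have := mxrank_leqif_sup S1.
  rewrite -tr_row_mx mxrank_tr !mxrank_tr -Hr => /leqif_refl.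
  by rewrite tr_row_mx col_mx_sub => /andP[].
case/submxP: Hsub => u Hu.
have Hw : A *m u^T = bb by rewrite -[bb]trmxK Hu trmx_mul trmxK.
set w := u^T.
have Hi : forall i, (WG W b L)^T *m @submxcol _ _ (fun _ => n L) _ w i = - (row i K)^T.
  move=> i; have := congr1 (fun M => @submxcol _ _ (fun _ => n O) _ M i) Hw.
  rewrite /bb /b_eq mxcolK => <-.
  rewrite -submxcol_mul /A /A_eq mxblockEv mxcolK.
  rewrite -[X in _ = _ *m X](submxcolK (p_ := fun _ => n L)) mul_mxrow_mxcol.
  rewrite (bigD1 i) //= eqxx.
  rewrite [X in _ = _ + X]big1 ?addr0 //.
  by move=> j; rewrite eq_sym => /negbTE ->; rewrite mul0mx.
exists (\matrix_(i, j) (@submxcol _ _ (fun _ => n L) _ w i) j ord0).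
apply/row_matrixP => i; rewrite row_mul.
have -> : row i (\matrix_(i, j) (@submxcol _ _ (fun _ => n L) _ w i) j ord0)
   = (@submxcol _ _ (fun _ => n L) _ w i)^T.
  by apply/rowP => j; rewrite !mxE.
by rewrite -[LHS]trmxK trmx_mul trmxK Hi linearN /= trmxK; apply/rowP => j; rewrite !mxE.
Qed.

End S.
Theorem theorem2 (R : realFieldType) (n : nat -> nat) (L nu : nat)
  (W : forall k, 'M[R]_(n k.+1, n k)) (b : forall k, 'cV[R]_(n k.+1))
  (Wo : 'M[R]_(nu, n L)) (bo : 'cV[R]_nu) (K : 'M[R]_(nu, n O)) :
  \rank (A_eq L nu W b) = \rank (row_mx (A_eq L nu W b) (b_eq K)) ->
  (\rank (A_eq L nu W b) <= nu * n L)%N ->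
  (exists (What : 'M[R]_(nu, n L)) (bhat : 'cV[R]_nu),
     is_solution W b K Wo bo What bhat) /\
  (forall (What : 'M[R]_(nu, n L)) (bhat : 'cV[R]_nu),
     is_solution W b K Wo bo What bhat ->
     forall x : 'cV[R]_(n O), in_Req L W b x ->
       network W b What bhat x = - K *m x).
Proof.
move=> Hr _; split.
  have [W0 HW0] := @feas_rank _ _ _ _ W b K Hr.
  have F0 : feasible W b K W0 (- (W0 *m bG W b L)) by split; rewrite ?subrr.
  have [P [HP Hmin]] := @proj_exists _ _ _ _ _ _ (row_mx Wo bo) _ ((feas_iff _ _ _ _ _ _ _ _ _).1 F0).
  exists (lsubmx P), (rsubmx P); split.
    by apply/feas_iff; rewrite hsubmxK.
  move=> W' b' F'; rewrite !cost_tr hsubmxK; apply: Hmin.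
  exact/feas_iff.
move=> What bhat [[H1 H2] _] x Hx.
rewrite /network (@hidden_Req _ _ _ _ _ _ Hx L (leqnn L)) mulmxDr mulmxA H1 -addrA H2 addr0.
by rewrite mulNmx.
Qed.
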